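(* Let $X$ be a nonnegative random variable and $\nu\ge1$. Suppose there exist constants $\Theta_1>0$ and $\Theta_2>0$ such that $\mathbb EX^p\le[p^{\nu p}+\Theta_2^{\nu p}]\Theta_1^{2p}$ for all integers $p\ge1$. Then for every $\vartheta>0$, $$\mathbb P(X>\vartheta)\le3\exp[\Theta_2/(2e)]\exp\Big[-\frac{\vartheta^{1/\nu}}{2e\Theta_1^{2/\nu}}\Big].$$ *)

(* Defs.v *)
From HB Require Import structures.
From mathcomp Require Import all_boot all_order all_algebra.
From mathcomp Require Import all_classical all_reals all_analysis.

(* Main.v *)
Require Import Defs.
From HB Require Import structures.
From mathcomp Require Import all_boot all_order all_algebra.
From mathcomp Require Import all_classical all_reals all_analysis.
From mathcomp Require Import measurable_realfun.
From mathcomp Require Import ring lra.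
Import Order.TTheory GRing.Theory Num.Theory.
Local Open Scope classical_set_scope.
Local Open Scope ring_scope.

Lemma markov_step (d : measure_display) (T : measurableType d) (R : realType)
  (P : probability T R) (X : {RV P >-> R}) (theta : R) (p : nat) :
  (forall w, 0 <= X w) -> 0 < theta ->
  ((theta ^+ p)%:E * P [set w | (theta < X w)%R] <= 'E_P[fun w => (X w ^+ p)%R])%E.
Proof.
move=> X0 th0.
have mX : measurable_fun [set: T] (EFin \o X : T -> \bar R).
  by apply/measurable_EFinP.
have E1 : [set w | theta%:E <= `|(X w)%:E| ]%E = [set w | theta%:E <= (X w)%:E]%E.
  apply/seteqP; split => w /=.
 by rewrite ger0_norm.
 by rewrite ger0_norm.
have hm := @markov _ _ _ P X (fun x => x ^+ p) theta th0 (exprn_measurable p)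
  (fun r r0 => exprn_ge0 _ r0).
have : {in Num.nneg &, {homo (fun x : R => x ^+ p) : x y / x <= y}}.
  exact: lerXn2r.
move=> /hm{hm}; rewrite E1.
have -> : ((fun x => x ^+ p) \o (fun x => `|x|) \o X) = (fun w => X w ^+ p).
  by apply: funext => w /=; rewrite ger0_norm.
apply: le_trans; apply: lee_wpmul2l; first by rewrite lee_fin exprn_ge0 // ltW.
apply: le_measure; rewrite ?inE.
- rewrite -[X in measurable X]setTI.
  apply: (@measurable_lte _ _ _ setT measurableT (fun=> theta%:E) (EFin \o X)) => //.
- rewrite -[X in measurable X]setTI.
  apply: (@measurable_lee _ _ _ setT measurableT (fun=> theta%:E) (EFin \o X)) => //.
- by move=> w /=; rewrite lee_fin => /ltW.
Qed.

Lemma ln_le_sub1 (R : realType) (x : R) : 0 < x -> ln x <= x - 1.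
Proof.
move=> x0; have := expR_ge1Dx (ln x); rewrite lnK ?posrE //; lra.
Qed.

Lemma real_bound (R : realType) (A nu t : R) (p : nat) :
  0 < A -> 1 <= nu -> 0 < t -> A < t -> 2 * expR 1 < t ->
  t / (2 * expR 1) < p%:R -> p%:R <= t / (2 * expR 1) + 1 ->
  expR (nu * p%:R * (ln p%:R - ln t)) + expR (nu * p%:R * (ln A - ln t))
  <= 2 * expR ((A - t) / (2 * expR 1)).
Proof.
move=> A0 nu1 t0 At et hp1 hp2.
set e := expR 1 in et hp1 hp2 *.
have nu0 : 0 < nu by lra.
have e0 : 0 < e by rewrite expR_gt0.
have e1 : 1 < e by rewrite expR_gt1.
have tde : t / (2 * e) * (2 * e) = t by rewrite mulfVK // mulf_neq0 // gt_eqF.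
have p0 : 0 < p%:R :> R.
  apply: lt_trans hp1; rewrite divr_gt0 // mulr_gt0 //.
have pte : p%:R <= t / e.
  apply: (le_trans hp2).
  have : t / e = t / (2 * e) * 2 by field; rewrite gt_eqF.
  move=> ->.
  have : 1 <= t / (2 * e) by rewrite ler_pdivlMr ?mul1r; [apply: ltW | rewrite mulr_gt0].
  lra.
have lp : ln p%:R <= ln t - 1.
  have -> : ln t - 1 = ln (t / e) by rewrite ln_div ?posrE // expRK.
  by rewrite ler_ln ?posrE // divr_gt0.
have F1 : nu * p%:R * (ln p%:R - ln t) <= (A - t) / (2 * e).
  have h1 : nu * p%:R * (ln p%:R - ln t) <= - p%:R.
    have : nu * p%:R * (ln p%:R - ln t) <= nu * p%:R * (-1).
      have hnp : 0 <= nu * p%:R by rewrite mulr_ge0 // ltW.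
      by rewrite ler_wpM2l //; lra.
    have : p%:R <= nu * p%:R by rewrite ler_peMl //; apply: ltW.
    lra.
  apply: (le_trans h1).
  have : (A - t) / (2 * e) = A / (2 * e) - t / (2 * e) by rewrite mulrBl.
  move=> ->.
  have : 0 < A / (2 * e) by rewrite divr_gt0 // mulr_gt0.
  lra.
have F2 : nu * p%:R * (ln A - ln t) <= (A - t) / (2 * e).
  have la : ln A - ln t <= A / t - 1.
    by rewrite -ln_div ?posrE //; apply: ln_le_sub1; rewrite divr_gt0.
  have At1 : A / t - 1 < 0 by rewrite subr_lt0 ltr_pdivrMr // mul1r.
  have h1 : nu * p%:R * (ln A - ln t) <= p%:R * (ln A - ln t).
    have q : 0 <= (nu - 1) * p%:R by rewrite mulr_ge0 //; lra.
    have D0 : ln A - ln t < 0 by lra.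
    nra.
  apply: (le_trans h1).
  have h2 : p%:R * (ln A - ln t) <= p%:R * (A / t - 1).
    by rewrite ler_wpM2l //; apply: ltW.
  apply: (le_trans h2).
  have h3 : p%:R * (A / t - 1) <= t / (2 * e) * (A / t - 1).
    by rewrite ler_wnM2r //; apply: ltW.
  apply: (le_trans h3).
  rewrite le_eqVlt; apply/orP; left; apply/eqP.
  field. by rewrite !gt_eqF.
rewrite -ler_expR in F1; rewrite -ler_expR in F2; lra.
Qed.

Lemma expRN1_ge (R : realType) : 1/3 <= expR (-1) :> R.
Proof.
have h : expR (-1) = expR (- (1/6)) ^+ 6 :> R.
  by rewrite -expRM_natl; congr expR; field.
have h2 : 5/6 <= expR (- (1/6)) :> R by have := expR_ge1Dx (- (1/6) : R); lra.
rewrite h; apply: le_trans (lerXn2r 6 _ _ h2); last first.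
- by rewrite nnegrE expR_ge0.
- by rewrite nnegrE; lra.
- rewrite !exprS expr0; lra.
Qed.

Lemma triv_bound (R : realType) (A t e : R) : 0 < A -> 0 < e -> (t <= A) || (t <= 2 * e) ->
  1 <= 3 * expR ((A - t) / (2 * e)).
Proof.
move=> A0 e0 H.
have hx : -1 <= (A - t) / (2 * e).
  rewrite ler_pdivlMr ?mulr_gt0 //.
  by case/orP: H => h; lra.
have := expRN1_ge R; rewrite -ler_expR in hx; lra.
Qed.

Lemma powR_pos (R : realType) (a x : R) : 0 < a -> a `^ x = expR (x * ln a).
Proof. by move=> a0; rewrite /powR gt_eqF. Qed.

Lemma meas_gt (d : measure_display) (T : measurableType d) (R : realType)
  (P : probability T R) (X : {RV P >-> R}) (theta : R) :
  measurable [set w | (theta < X w)%R].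
Proof.
have mX : measurable_fun [set: T] (EFin \o X : T -> \bar R).
  by apply/measurable_EFinP.
rewrite -[X in measurable X]setTI.
have -> : [set w | (theta < X w)%R] = [set w | (theta%:E < (EFin \o X) w)%E].
  by apply/seteqP; split => w /=; rewrite lte_fin.
exact: (@measurable_lte _ _ _ setT measurableT (fun=> theta%:E) (EFin \o X)).
Qed.

Theorem corollaryB2 (d : measure_display) (T : measurableType d) (R : realType)
  (P : probability T R) (X : {RV P >-> R}) (nu Th1 Th2 : R) :
  (forall w, 0 <= X w) ->
  1 <= nu -> 0 < Th1 -> 0 < Th2 ->
  (forall p : nat, (1 <= p)%N ->
     ('E_P[fun w => (X w ^+ p)%R] <=
      (((p%:R `^ (nu * p%:R)) + (Th2 `^ (nu * p%:R))) * Th1 ^+ (2 * p))%:E)%E) ->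
  forall theta : R, 0 < theta ->
  (P [set w | (theta < X w)%R] <=
   (3 * expR (Th2 / (2 * expR 1))
      * expR (- (theta `^ (nu^-1) / (2 * expR 1 * Th1 `^ (2 / nu)))))%:E)%E.
Proof.
move=> X0 nu1 Th10 Th20 hE theta th0.
set e := expR 1.
have e0 : 0 < e by rewrite expR_gt0.
have nu0 : 0 < nu by lra.
set t := theta `^ nu^-1 / Th1 `^ (2/nu).
have t0 : 0 < t by rewrite divr_gt0 // powR_gt0.
have -> : 3 * expR (Th2 / (2 * e)) * expR (- (theta `^ nu^-1 / (2 * e * Th1 `^ (2 / nu))))
    = 3 * expR ((Th2 - t) / (2 * e)).
  rewrite -mulrA -expRD; congr (_ * expR _); rewrite /t; field.
  by rewrite !gt_eqF // powR_gt0.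
case: (boolP ((Th2 < t) && (2 * e < t))) => [/andP [At et] | H].
  set p := (Num.truncn (t / (2 * e))).+1.
  have hp1 : t / (2 * e) < p%:R by exact: truncnS_gt.
  have hp2 : p%:R <= t / (2 * e) + 1.
    rewrite /p -natr1 lerD2r truncn_le; apply: divr_ge0; apply: ltW => //.
    exact: mulr_gt0.
  have hM := @markov_step _ _ _ P X theta p X0 th0.
  have hEp := hE p isT.
  set B := 3 * expR ((Th2 - t) / (2 * e)).
  have key : (p%:R `^ (nu * p%:R) + Th2 `^ (nu * p%:R)) * Th1 ^+ (2 * p)
      <= theta ^+ p * B.
    have p0 : 0 < p%:R :> R by rewrite ltr0n.
    have hlt : ln t = nu^-1 * ln theta - 2 / nu * ln Th1.
      by rewrite /t ln_div ?posrE ?powR_gt0 // !ln_powR.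
    rewrite !powR_pos //.
    have eT1 : Th1 ^+ (2 * p) = expR ((2 * p)%:R * ln Th1).
      by rewrite expRM_natl lnK ?posrE.
    have eth : theta ^+ p = expR (p%:R * ln theta).
      by rewrite expRM_natl lnK ?posrE.
    have k1 : forall c, expR (nu * p%:R * c) * expR ((2 * p)%:R * ln Th1)
        = expR (p%:R * ln theta) * expR (nu * p%:R * (c - ln t)).
      move=> c; rewrite -!expRD; congr expR; rewrite hlt natrM; field.
      by rewrite gt_eqF.
    rewrite eT1 eth mulrDl !k1 -mulrDr ler_wpM2l ?expR_ge0 //.
    apply: le_trans (@real_bound R Th2 nu t p Th20 nu1 t0 At et hp1 hp2) _.
    by rewrite /B ler_wpM2r ?expR_ge0 // ler_nat.
  have hB : (0 < (theta ^+ p)%:E)%E by rewrite lte_fin exprn_gt0.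
  rewrite -(lee_pmul2l _ hB) //.
  apply: (le_trans hM); apply: (le_trans hEp).
  by rewrite -EFinM lee_fin.
apply: (le_trans (probability_le1 P (@meas_gt _ _ _ P X theta))).
rewrite lee_fin; apply: triv_bound => //.
by move: H; rewrite negb_and -!leNgt.
Qed.
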